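(* For all positive integers $a,b$, the Aztec rectangle $\mathcal{AR}_{a,b}$ (with no defects) has no 180-cover.
   Context: A cell is a unit square $[i,i+1]\times[j,j+1]$ with $i,j\in\mathbb{Z}$, labelled $(i,j)$. The right-oriented trominoes are the translates of $\{(0,0),(1,0),(1,1)\}$ and of $\{(0,0),(0,1),(1,1)\}$; the left-oriented trominoes are the translates of $\{(0,1),(1,0),(1,1)\}$ and of $\{(0,0),(0,1),(1,0)\}$. A 180-cover of a region $R$ is a partition of $R$ into trominoes which are either all right-oriented or all left-oriented. For positive integers $a,b$, the Aztec rectangle $\mathcal{AR}_{a,b}$ is (up to translation) the region consisting of the cells $(i,j)\in\mathbb{Z}^2$ with $0\le i+j\le 2b$ and $1\le j-i\le 2a+1$. *)

(* Defs.v *)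
From Stdlib Require Import ZArith List.
Import ListNotations.
Open Scope Z_scope.

(* A cell (i,j) is the unit square [i,i+1]x[j,j+1]. A region is a set of cells. *)
Definition cell := (Z * Z)%type.
Definition region := cell -> Prop.

Inductive shape := RA | RB | LA | LB.

Definition shape_cells (s : shape) : list cell :=
  match s with
  | RA => [(0,0); (1,0); (1,1)]
  | RB => [(0,0); (0,1); (1,1)]
  | LA => [(0,1); (1,0); (1,1)]
  | LB => [(0,0); (0,1); (1,0)]
  end.

Definition right_oriented (s : shape) : Prop := s = RA \/ s = RB.
Definition left_oriented (s : shape) : Prop := s = LA \/ s = LB.

(* A tromino: a shape translated by (tx, ty). Distinct records give distinct
   cell sets, so records represent trominoes faithfully. *)
Record tromino := Tromino { tshape : shape; tx : Z; ty : Z }.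

Definition in_tromino (t : tromino) (c : cell) : Prop :=
  exists p, In p (shape_cells (tshape t)) /\
            c = (tx t + fst p, ty t + snd p).

Definition tromino_partition (R : region) (P : tromino -> Prop) : Prop :=
  (forall t c, P t -> in_tromino t c -> R c) /\
  (forall c, R c -> exists t, P t /\ in_tromino t c) /\
  (forall t1 t2 c, P t1 -> P t2 -> in_tromino t1 c -> in_tromino t2 c -> t1 = t2).

Definition cover180 (R : region) (P : tromino -> Prop) : Prop :=
  tromino_partition R P /\
  ((forall t, P t -> right_oriented (tshape t)) \/
   (forall t, P t -> left_oriented (tshape t))).

Definition aztec_rectangle (a b : Z) : region :=
  fun c => 0 <= fst c + snd c <= 2 * b /\ 1 <= snd c - fst c <= 2 * a + 1.

(* Main.v *)
Require Import Defs.
From Stdlib Require Import ZArith List Lia.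
Open Scope Z_scope.

Lemma intr s x y i j p : In p (shape_cells s) -> i = x + fst p -> j = y + snd p ->
  in_tromino (Tromino s x y) (i, j).
Proof. intros H -> ->. exists p. split; auto. Qed.

Lemma trf R P s x y i j p : tromino_partition R P -> P (Tromino s x y) ->
  In p (shape_cells s) -> i = x + fst p -> j = y + snd p -> R (i, j).
Proof. intros [H _] HP Hin Hi Hj. eapply H; [exact HP|]. eapply intr; eauto. Qed.

Ltac dintr H := let p := fresh "p" in let Hp := fresh in let He := fresh in
  destruct H as [p [Hp He]]; simpl in Hp;
  destruct Hp as [<-|[<-|[<-|[]]]]; simpl in He; injection He as ? ?.

Ltac facts Hpart HP s x y :=
  let f p := (let H := fresh "F" in
     pose proof (trf _ _ s x y _ _ p Hpart HP ltac:(simpl; tauto) eq_refl eq_refl) as H;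
     unfold aztec_rectangle in H; cbn [fst snd] in H) in
  match s with
  | RA => f (0,0); f (1,0); f (1,1)
  | RB => f (0,0); f (0,1); f (1,1)
  | LA => f (0,1); f (1,0); f (1,1)
  | LB => f (0,0); f (0,1); f (1,0)
  end.

Lemma uniq R P t1 t2 c : tromino_partition R P -> P t1 -> P t2 ->
  in_tromino t1 c -> in_tromino t2 c -> t1 = t2.
Proof. intros [_ [_ H]]. eauto. Qed.

Ltac getcov Hpart Hor c :=
  let H := fresh in
  destruct (proj1 (proj2 Hpart) c ltac:(unfold aztec_rectangle; cbn [fst snd]; lia))
    as [[s x y] [?HP H]];
  destruct (Hor _ HP) as [Hs|Hs]; simpl in Hs; subst s; dintr H.

Section R.
Lemma rightA a b P (Hpart : tromino_partition (aztec_rectangle a b) P)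
  (Hor : forall t, P t -> right_oriented (tshape t)) (Hb : 0 < b) k : 1 <= k <= a ->
  exists t, P t /\ (t = Tromino RA (-k) k \/ t = Tromino RB (-k) k).
Proof.
  intros Hk. getcov Hpart Hor (-k, k).
  all: first [facts Hpart HP RA x y | facts Hpart HP RB x y]; try lia.
  - eexists; split; [exact HP|left]; f_equal; lia.
  - eexists; split; [exact HP|right]; f_equal; lia.
Qed.

Lemma stepB a b P (Hpart : tromino_partition (aztec_rectangle a b) P)
  (Hor : forall t, P t -> right_oriented (tshape t)) (Hb : 0 < b) k : 0 <= k <= a ->
  (k = 0 \/ P (Tromino RA (-k) k)) -> k + 1 <= a /\ P (Tromino RA (-(k+1)) (k+1)).
Proof.
  intros Hk Hh. getcov Hpart Hor (-k, k+1).
  all: first [facts Hpart HP RA x y | facts Hpart HP RB x y]; try lia.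
  -
    destruct Hh as [->|Hh]; [lia|].
    assert (E := uniq _ _ _ _ (-k+1, k+1) Hpart HP Hh
      ltac:(eapply intr with (p := (1,0)); simpl; try tauto; lia)
      ltac:(eapply intr with (p := (1,1)); simpl; try tauto; lia)).
    injection E; lia.
  - split; [lia|]. replace (-(k+1)) with x by lia. replace (k+1) with y by lia. exact HP.
  -
    destruct (rightA a b P Hpart Hor Hb (k+1) ltac:(lia)) as [t' [HP' [-> | ->]]].
    + assert (E := uniq _ _ _ _ (-k, k+2) Hpart HP HP'
        ltac:(eapply intr with (p := (0,1)); simpl; try tauto; lia)
        ltac:(eapply intr with (p := (1,1)); simpl; try tauto; lia)).
      discriminate E.
    + assert (E := uniq _ _ _ _ (-k, k+2) Hpart HP HP'
        ltac:(eapply intr with (p := (0,1)); simpl; try tauto; lia)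
        ltac:(eapply intr with (p := (1,1)); simpl; try tauto; lia)).
      injection E; lia.
  - destruct Hh as [->|Hh]; [lia|].
    assert (E := uniq _ _ _ _ (-k, k) Hpart HP Hh
      ltac:(eapply intr with (p := (0,0)); simpl; try tauto; lia)
      ltac:(eapply intr with (p := (0,0)); simpl; try tauto; lia)).
    discriminate E.
Qed.
End R.

Lemma leftD a b P (Hpart : tromino_partition (aztec_rectangle a b) P)
  (Hor : forall t, P t -> left_oriented (tshape t)) (Ha : 0 < a) k : 1 <= k <= b ->
  exists t, P t /\ (t = Tromino LA (k-2) k \/ t = Tromino LB (k-2) k).
Proof.
  intros Hk. getcov Hpart Hor (k-1, k).
  all: first [facts Hpart HP LA x y | facts Hpart HP LB x y]; try lia.
  - eexists; split; [exact HP|left]; f_equal; lia.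
  - eexists; split; [exact HP|right]; f_equal; lia.
Qed.

Lemma stepE a b P (Hpart : tromino_partition (aztec_rectangle a b) P)
  (Hor : forall t, P t -> left_oriented (tshape t)) (Ha : 0 < a) k : 0 <= k <= b ->
  (k = 0 \/ P (Tromino LB (k-2) k)) -> k + 1 <= b /\ P (Tromino LB (k-1) (k+1)).
Proof.
  intros Hk Hh. getcov Hpart Hor (k-1, k+1).
  all: first [facts Hpart HP LA x y | facts Hpart HP LB x y]; try lia.
  - destruct (leftD a b P Hpart Hor Ha (k+1) ltac:(lia)) as [t' [HP' [-> | ->]]].
    + assert (E := uniq _ _ _ _ (k-1, k+2) Hpart HP HP'
        ltac:(eapply intr with (p := (1,1)); simpl; try tauto; lia)
        ltac:(eapply intr with (p := (0,1)); simpl; try tauto; lia)).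
      injection E; lia.
    + assert (E := uniq _ _ _ _ (k-1, k+2) Hpart HP HP'
        ltac:(eapply intr with (p := (1,1)); simpl; try tauto; lia)
        ltac:(eapply intr with (p := (0,1)); simpl; try tauto; lia)).
      discriminate E.
  - destruct Hh as [->|Hh]; [lia|].
    assert (E := uniq _ _ _ _ (k-1, k) Hpart HP Hh
      ltac:(eapply intr with (p := (1,0)); simpl; try tauto; lia)
      ltac:(eapply intr with (p := (1,0)); simpl; try tauto; lia)).
    discriminate E.
  - split; [lia|]. replace (k-1) with x by lia. replace (k+1) with y by lia. exact HP.
  - destruct Hh as [->|Hh]; [lia|].
    assert (E := uniq _ _ _ _ (k-2, k+1) Hpart HP Hh
      ltac:(eapply intr with (p := (0,0)); simpl; try tauto; lia)
      ltac:(eapply intr with (p := (0,1)); simpl; try tauto; lia)).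
    injection E; lia.
Qed.

Theorem theorem5 (a b : Z) (ha : 0 < a) (hb : 0 < b) :
  ~ exists P : tromino -> Prop, cover180 (aztec_rectangle a b) P.
Proof.
  intros [P [Hpart [Hor|Hor]]].
  - assert (H : forall n : nat, Z.of_nat n <= a /\
        (Z.of_nat n = 0 \/ P (Tromino RA (- Z.of_nat n) (Z.of_nat n)))).
    { induction n as [|n [IH1 IH2]].
      - simpl. split; [lia | auto].
      - destruct (stepB a b P Hpart Hor hb (Z.of_nat n) ltac:(lia) IH2) as [H1 H2].
        rewrite Nat2Z.inj_succ, <- Z.add_1_r. split; [lia|right; exact H2]. }
    destruct (H (S (Z.to_nat a))) as [H1 _]. lia.
  - assert (H : forall n : nat, Z.of_nat n <= b /\
        (Z.of_nat n = 0 \/ P (Tromino LB (Z.of_nat n - 2) (Z.of_nat n)))).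
    { induction n as [|n [IH1 IH2]].
      - simpl. split; [lia | auto].
      - destruct (stepE a b P Hpart Hor ha (Z.of_nat n) ltac:(lia) IH2) as [H1 H2].
        rewrite Nat2Z.inj_succ, <- Z.add_1_r. split; [lia|right].
        replace (Z.of_nat n + 1 - 2) with (Z.of_nat n - 1) by lia. exact H2. }
    destruct (H (S (Z.to_nat b))) as [H1 _]. lia.
Qed.
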